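(* Let $T$ be a monad on $\mathsf{Set}$, let $X,Y$ be sets, let $\mu\in T(X)$ have formal presentation $(\Gamma,\langle x_i\rangle_{i\in[n]})$ with $\Gamma\in T([n])$, and let $f:X\to T(Y)$. For each $i\in[n]$ let $(\Delta_i,\langle y_{i,j}\rangle_{j\in[m_i]})$, with $\Delta_i\in T([m_i])$, be a formal presentation of $f(x_i)$. Then $\mu\mathrel{>\!\!>=} f$ has the formal presentation $(\Xi,\langle y_{i,j}\rangle_{i\in[n],\,j\in[m_i]})$, where $\Xi\in T([l])$, $l=\sum_{i\in[n]}m_i$, is the sequential composition of $\Gamma$ with the family $(\Delta_i)_{i\in[n]}$.
   Context: $[n]=\{1,\dots,n\}$ for $n\in\mathbb{N}$, $[\omega]=\mathbb{N}$; $\mathbb{N}\cup\{\omega\}$ indexes these sets and $[l]$ is identified (via a fixed bijection) with the disjoint union $\coprod_{i\in[n]}[m_i]$, so that sequences indexed by pairs $(i,j)$ with $j\in[m_i]$ are sequences indexed by $[l]$. For $\mu\in T(X)$ and $f:X\to T(Y)$, $\mu\mathrel{>\!\!>=} f$ is the Kleisli extension of $f$ applied to $\mu$. A formal presentation of $\mu\in T(X)$ is a pair $(\Gamma,x)$ with $\Gamma\in T([n])$ and $x:[n]\to X$ (a sequence $\langle x_i\rangle$) such that $\mu=T(x)(\Gamma)$. An $n$-ary algebraic operation is a family $\gamma_X:T(X)^n\to T(X)$ with $\gamma_X(\mu_1,\dots)\mathrel{>\!\!>=} f=\gamma_Y(\mu_1\mathrel{>\!\!>=} f,\dots)$ for all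 $f:X\to T(Y)$; generic effects $\Gamma\in T([n])$ correspond bijectively to $n$-ary algebraic operations via $\gamma_X(\mu_1,\dots,\mu_i,\dots)=\Gamma\mathrel{>\!\!>=}(i\mapsto\mu_i)$ and $\Gamma=\gamma_{[n]}(\eta(1),\dots,\eta(i),\dots)$. The sequential composition of $\Gamma\in T([n])$ (with operation $\gamma$) and $\Delta_i\in T([m_i])$ (with operations $\delta_i$) is the generic effect in $T([l])$ corresponding to the $l$-ary algebraic operation $T(Z)^{l}\cong\prod_{i\in[n]}T(Z)^{m_i}\xrightarrow{\langle\delta_i\rangle_i}T(Z)^n\xrightarrow{\gamma}T(Z)$. *)

(* Defs.v *)
(* a monad on Set is modelled as a Kleisli triple on Types. *)
Set Implicit Arguments.

Inductive arity : Type := Fin (n : nat) | Omega.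

(** [n] : an n-element set (for n finite), [ω] = N. *)
Definition idx (a : arity) : Type :=
  match a with Fin n => {k : nat | k < n} | Omega => nat end.

Record Monad : Type := {
  T :> Type -> Type;
  ret : forall X : Type, X -> T X;
  bind : forall X Y : Type, T X -> (X -> T Y) -> T Y;
  bind_ret_l : forall (X Y : Type) (x : X) (f : X -> T Y), bind (ret x) f = f x;
  bind_ret_r : forall (X : Type) (m : T X), bind m (@ret X) = m;
  bind_assoc : forall (X Y Z : Type) (m : T X) (f : X -> T Y) (g : Y -> T Z),
      bind (bind m f) g = bind m (fun x => bind (f x) g)
}.

Arguments ret {m0 X} x.
Arguments bind {m0 X Y} _ _.

Definition fmap {M : Monad} (X Y : Type) (f : X -> Y) (m : M X) : M Y :=
  bind m (fun x => ret (f x)).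

Definition formal_presentation {M : Monad} (X : Type) (n : arity)
    (mu : M X) (Gamma : M (idx n)) (x : idx n -> X) : Prop :=
  mu = fmap x Gamma.

Definition operation (M : Monad) (n : arity) : Type :=
  forall Z : Type, (idx n -> M Z) -> M Z.

Definition op_of_generic {M : Monad} (n : arity) (G : M (idx n)) : operation M n :=
  fun Z nu => bind G nu.

Definition generic_of_op {M : Monad} (n : arity) (g : operation M n) : M (idx n) :=
  g (idx n) (fun i => ret i).

(** Sequential composition of Γ ∈ T([n]) with Δ_i ∈ T([m_i]), where [l] is
    identified with the disjoint union of the [m_i] via [inj] (the map
    ∐_i [m_i] -> [l] of the fixed bijection). *)
Definition seq_comp {M : Monad} (n : arity) (m : idx n -> arity) (l : arity)
    (inj : {i : idx n & idx (m i)} -> idx l)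
    (Gamma : M (idx n)) (Delta : forall i, M (idx (m i))) : M (idx l) :=
  @generic_of_op M l (fun Z (nu : idx l -> M Z) =>
    @op_of_generic M n Gamma Z
      (fun i => @op_of_generic M (m i) (Delta i) Z (fun j => nu (inj (existT _ i j))))).

(* Main.v *)
Require Import Defs.
From Stdlib Require Import FunctionalExtensionality.

Theorem theorem5p10 (M : Monad) (X Y : Type) (n : arity)
    (mu : M X) (Gamma : M (idx n)) (x : idx n -> X)
    (f : X -> M Y)
    (m : idx n -> arity) (Delta : forall i : idx n, M (idx (m i)))
    (y : forall i : idx n, idx (m i) -> Y)
    (l : arity)
    (inj : {i : idx n & idx (m i)} -> idx l)
    (proj : idx l -> {i : idx n & idx (m i)}) :
  (forall p, proj (inj p) = p) ->
  (forall k, inj (proj k) = k) ->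
  @formal_presentation M X n mu Gamma x ->
  (forall i : idx n, @formal_presentation M Y (m i) (f (x i)) (Delta i) (y i)) ->
  @formal_presentation M Y l (bind mu f) (@seq_comp M n m l inj Gamma Delta)
    (fun k : idx l => y (projT1 (proj k)) (projT2 (proj k))).
Proof.
  intros Hpi Hip Hmu Hf.
  unfold formal_presentation, seq_comp, generic_of_op, op_of_generic, fmap in *.
  subst mu.
  rewrite !bind_assoc.
  apply f_equal. apply functional_extensionality; intro i.
  rewrite bind_ret_l, Hf, !bind_assoc.
  apply f_equal. apply functional_extensionality; intro j.
  rewrite bind_ret_l, Hpi. reflexivity.
Qed.
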